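(* Let $k$ be a field, $(X,\leq)$ a locally finite preordered set and $C=IC(X)$ its incidence coalgebra. Let $(\mathcal C_i)_{i\in I}$ be the equivalence classes of $\sim$ and $D_i=\sum_{x,y\in\mathcal C_i}k e_{x,y}$. Then: (i) the coradical $C_0$ of $C$ equals $\sum_{i\in I}D_i$; (ii) for every $n\geq 0$, the $(n+1)$-th term $C_n$ of the coradical filtration of $C$ is the subspace spanned by all $e_{x,y}$ such that the interval $[x,y]$ has length at most $n$.
   Context: A preorder is reflexive and transitive; $(X,\leq)$ is locally finite if each $[x,y]=\{z\mid x\leq z\leq y\}$ is finite. $IC(X)$ has $k$-basis $\{e_{x,y}\mid x\leq y\}$, comultiplication $\Delta(e_{x,y})=\sum_{x\leq z\leq y}e_{x,z}\otimes e_{z,y}$ and counit $\varepsilon(e_{x,y})=\delta_{x,y}$. $x\sim y$ means $x\leq y$ and $y\leq x$. The coradical $C_0$ is the sum of all simple subcoalgebras; for subspaces $U,V$, $U\wedge V=\Delta^{-1}(U\otimes C+C\otimes V)$, and $C_n=C_0\wedge C_{n-1}$ for $n\ge1$. For $x\leq y$, the length of $[x,y]$ is $0$ if $x\sim y$, and otherwise is the greatest $n>0$ such that there is a chain $x=x_0<x_1<\cdots<x_n=y$ in $X$ (where $a<b$ means $a\leq b$ and not $b\leq a$). *)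

(* Defs.v *)
From mathcomp Require Import all_boot all_algebra.
From Stdlib Require Lists.List.
From mathcomp Require Import boolp.
Set Implicit Arguments. Unset Strict Implicit. Unset Printing Implicit Defensive.
Import GRing.Theory.
Local Open Scope ring_scope.

Section IncidenceCoalgebra.
Variables (k : fieldType) (X : Type) (le : X -> X -> Prop).

Definition preorder_rel : Prop :=
  (forall x, le x x) /\ (forall x y z, le x y -> le y z -> le x z).
Definition locally_finite : Prop :=
  forall x y, exists s : list X, forall z, le x z -> le z y -> Stdlib.Lists.List.In z s.

Definition sim x y := le x y /\ le y x.
Definition lt x y := le x y /\ ~ le y x.

(* Ambient spaces: k-valued functions on X*X (for C) and on (X*X)*(X*X)
   (for C (x) C, identified with the lspan of e_{a,b} (x) e_{c,d}). *)
Definition vec := (X * X)%type -> k.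
Definition tvec := ((X * X) * (X * X))%type -> k.

Inductive lspan (I : Type) (S : (I -> k) -> Prop) : (I -> k) -> Prop :=
| span0 : lspan S (fun _ => 0)
| span_in v : S v -> lspan S v
| span_comb (a : k) v w : lspan S v -> lspan S w -> lspan S (fun i => a * v i + w i).

Definition e (x y : X) : vec := fun p => if `[< p = (x, y) >] then 1 else 0.

Definition inC (v : vec) : Prop := lspan (fun w => exists x y, le x y /\ w = e x y) v.

Definition tens (u w : vec) : tvec := fun pq => u pq.1 * w pq.2.

(* comultiplication: Delta(e_{x,y}) = sum_{x<=z<=y} e_{x,z} (x) e_{z,y},
   written coefficientwise (linear extension). *)
Definition Delta (v : vec) : tvec := fun pq =>
  let: ((a, b), (c, d)) := pq in
  if `[< b = c /\ le a b /\ le b d >] then v (a, d) else 0.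


Definition subspace (U : vec -> Prop) : Prop :=
  (forall v, U v -> inC v) /\ U (fun _ => 0) /\
  (forall a v w, U v -> U w -> U (fun i => a * v i + w i)).

Definition tensor_sub (U V : vec -> Prop) : tvec -> Prop :=
  lspan (fun t => exists u w, U u /\ V w /\ t = tens u w).

Definition subcoalgebra (D : vec -> Prop) : Prop :=
  subspace D /\ forall v, D v -> tensor_sub D D (Delta v).

Definition simple_subcoalgebra (D : vec -> Prop) : Prop :=
  subcoalgebra D /\ (exists v, D v /\ v <> (fun _ => 0)) /\
  forall E, subcoalgebra E -> (forall v, E v -> D v) ->
    (forall v, E v -> v = (fun _ => 0)) \/ (forall v, D v -> E v).

Definition coradical : vec -> Prop :=
  lspan (fun v => exists D, simple_subcoalgebra D /\ D v).

Definition wedge (U V : vec -> Prop) : vec -> Prop := fun c =>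
  inC c /\ lspan (fun t => tensor_sub U inC t \/ tensor_sub inC V t) (Delta c).

Fixpoint corad_filt (n : nat) : vec -> Prop :=
  match n with
  | 0%N => coradical
  | n'.+1 => wedge coradical (corad_filt n')
  end.

Definition has_chain (x y : X) (m : nat) : Prop :=
  exists f : nat -> X, f 0%N = x /\ f m = y /\ forall i, (i < m)%N -> lt (f i) (f i.+1).

Definition interval_length (x y : X) (n : nat) : Prop :=
  (sim x y /\ n = 0%N) \/
  (~ sim x y /\ (0 < n)%N /\ has_chain x y n /\ forall m, has_chain x y m -> (m <= n)%N).

Definition Dclass (c : X) : vec -> Prop :=
  lspan (fun w => exists x y, sim x c /\ sim y c /\ w = e x y).

End IncidenceCoalgebra.

(* Main.v *)
Require Import Defs.
From mathcomp Require Import all_boot all_algebra.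
From mathcomp Require Import boolp.
Set Implicit Arguments. Unset Strict Implicit. Unset Printing Implicit Defensive.
Import GRing.Theory.
Local Open Scope ring_scope.
Section Gen.
Variable k : fieldType.

Lemma span_mono (I : Type) (S T : (I -> k) -> Prop) v :
  (forall w, S w -> lspan T w) -> lspan S v -> lspan T v.
Proof.
move=> ST; elim=> [|w /ST //|a v1 w _ IH1 _ IH2]; [exact: span0 | exact: span_comb].
Qed.

Lemma span_vanish (I : Type) (S : (I -> k) -> Prop) v p :
  (forall w, S w -> w p = 0) -> lspan S v -> v p = 0.
Proof.
move=> H; elim=> [//|w /H //|a v1 w _ -> _ ->]; by rewrite mulr0 addr0.
Qed.

Lemma span_gen (I : Type) (S : (I -> k) -> Prop) v p :
  lspan S v -> v p != 0 -> exists w, S w /\ w p != 0.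
Proof.
move=> Hv Hp; apply: contrapT => Hn; move/eqP: Hp; apply.
apply: (span_vanish _ Hv) => w Sw; apply: contrapT => Hw; apply: Hn; exists w; split=> //; exact/eqP.
Qed.

Definition dlt (I : Type) (i : I) : I -> k := fun j => if `[< j = i >] then 1 else 0.

Lemma fin_supp (I : Type) (S : (I -> k) -> Prop) (L : list I) (f : I -> k) :
  (forall i, f i != 0 -> List.In i L /\ lspan S (dlt i)) -> lspan S f.
Proof.
elim: L f => [|p L IH] f H.
  have -> : f = (fun _ => 0) by apply: funext => i; apply: contrapT => /eqP /H [] [].
  exact: span0.
case: (eqVneq (f p) 0) => fp.
  apply: IH => i /[dup] fi /H [[Ep|iL] Si] //. by move: fi; rewrite -Ep fp eqxx.
have -> : f = (fun i => f p * dlt p i + (fun j => if `[< j = p >] then 0 else f j) i).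
  apply: funext => i; rewrite /dlt; case: (pselect (i = p)) => [->|ip].
    by rewrite asboolT // mulr1 addr0.
  by rewrite asboolF // mulr0 add0r.
apply: span_comb; first by case: (H p fp).
apply: IH => i; case: (pselect (i = p)) => [->|ip]; first by rewrite asboolT // eqxx.
rewrite asboolF // => /H [[Ep|]]; by [move: ip; rewrite Ep|].
Qed.

End Gen.
Section Inc.
Variables (k : fieldType) (X : Type) (le : X -> X -> Prop).
Hypothesis Hpre : preorder_rel le.
Hypothesis Hlf : locally_finite le.

Lemma lerefl x : le x x. Proof. by case: Hpre. Qed.
Lemma letrans x y z : le x y -> le y z -> le x z.
Proof. by case: Hpre => _; apply. Qed.

Lemma Delta_comb a (v w : vec k X) :
  Delta le (fun i => a * v i + w i) = fun t => a * Delta le v t + Delta le w t.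
Proof.
apply: funext => -[[p1 p2] [q1 q2]] /=.
by case: ifP => _ //; rewrite mulr0 addr0.
Qed.

Lemma Delta0 : Delta le (fun _ : X * X => 0 : k) = fun _ => 0.
Proof. by apply: funext => -[[p1 p2] [q1 q2]] /=; case: ifP. Qed.

Lemma tens_e (x y z w : X) :
  tens (e k x y) (e k z w) = dlt k ((x, y), (z, w)).
Proof.
apply: funext => -[p q]; rewrite /tens /e /dlt /=.
case: (pselect (p = (x, y))) => [->|np].
  rewrite asboolT //; case: (pselect (q = (z, w))) => [->|nq].
    by rewrite !asboolT // mulr1.
  rewrite !asboolF ?mulr0 //; by case=> /nq.
rewrite (asboolF np) mul0r asboolF //; by case=> /np.
Qed.

Lemma e_neq0 (x y : X) p : e k x y p != 0 -> p = (x, y).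
Proof. rewrite /e; case: (pselect (p = (x, y))) => // np; by rewrite asboolF ?eqxx. Qed.

Lemma e_at (x y : X) : e k x y (x, y) = 1.
Proof. by rewrite /e asboolT. Qed.

Lemma Delta_e_span (S : tvec k X -> Prop) x y :
  (forall z, le x z -> le z y -> lspan S (tens (e k x z) (e k z y))) ->
  lspan S (Delta le (e k x y)).
Proof.
move=> H; have [s Hs] := Hlf x y.
apply: (@fin_supp _ _ _ (List.map (fun z => ((x, z), (z, y))) s)).
move=> [[a b] [c d]] /=.
case: (pselect (b = c /\ le a b /\ le b d)) => [[bc [lab lbd]]|nc]; last by rewrite asboolF ?eqxx.
rewrite asboolT // => /e_neq0 [ea ed]; subst.
split; first by apply: List.in_map; apply: Hs.
by rewrite -tens_e; apply: H.
Qed.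

End Inc.
Ltac asb := repeat match goal with |- context [ `[< ?P >] ] =>
  let H := fresh "H" in destruct (pselect P) as [H|H];
  [rewrite (asboolT H) | rewrite (asboolF H)] end.

Ltac fin := try done; exfalso; repeat match goal with
 | H : _ /\ _ |- _ => destruct H
 | H : (_,_) = (_,_) |- _ => injection H; clear H; intros
 end; subst; solve [ match goal with H : ~ _ |- _ => apply H; repeat split; auto end ].

Section Sub.
Variables (k : fieldType) (X : Type) (le : X -> X -> Prop).
Hypothesis Hpre : preorder_rel le.

Definition Tl (p : X * X) (t : tvec k X) : vec k X := fun q => t (p, q).
Definition Tr (q : X * X) (t : tvec k X) : vec k X := fun p => t (p, q).

Lemma sub_scale (E : vec k X -> Prop) a v : subspace le E -> E v -> E (fun i => a * v i).
Proof.
case=> _ [E0 Ec] Ev.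
have -> : (fun i => a * v i) = (fun i => a * v i + (fun _ => 0) i) by apply: funext=> i; rewrite addr0.
exact: Ec.
Qed.

Lemma Tl_in (E : vec k X -> Prop) p t : subspace le E -> tensor_sub E E t -> E (Tl p t).
Proof.
move=> sE; elim=> [|_ [u [w [Eu [Ew ->]]]]|a v w _ IH1 _ IH2].
- by case: sE => _ [].
- rewrite /Tl /tens /=; exact: sub_scale.
- by case: sE => _ [_]; apply.
Qed.

Lemma Tr_in (E : vec k X -> Prop) q t : subspace le E -> tensor_sub E E t -> E (Tr q t).
Proof.
move=> sE; elim=> [|_ [u [w [Eu [Ew ->]]]]|a v w _ IH1 _ IH2].
- by case: sE => _ [].
- rewrite /Tr /tens /=.
  have -> : (fun p => u p * w q) = (fun p => w q * u p) by apply: funext => p; rewrite mulrC.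
  exact: sub_scale.
- by case: sE => _ [_]; apply.
Qed.

Lemma stepB (E : vec k X -> Prop) a d x :
  subcoalgebra le E -> E (e k a d) -> le a x -> le x d -> E (e k x d).
Proof.
move=> [sE dE] Ead lax lxd.
have := Tl_in (a, x) sE (dE _ Ead).
congr E; apply: funext => -[c d']; rewrite /Tl /= /e.
asb; fin.
Qed.

Lemma stepC (E : vec k X -> Prop) x d y :
  subcoalgebra le E -> E (e k x d) -> le x y -> le y d -> E (e k x y).
Proof.
move=> [sE dE] Exd lxy lyd.
have := Tr_in (y, d) sE (dE _ Exd).
congr E; apply: funext => -[p1 p2]; rewrite /Tr /= /e.
asb; fin.
Qed.

Lemma stepA (E : vec k X -> Prop) v a d :
  subcoalgebra le E -> E v -> v (a, d) != 0 -> le a d -> E (e k a d).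
Proof.
move=> [sE dE] Ev Hv lad.
have E1 := Tl_in (a, a) sE (dE _ Ev).
have E2 := Tr_in (d, d) sE (dE _ E1).
have := sub_scale (v (a, d))^-1 sE E2.
congr E; apply: funext => -[p1 p2]; rewrite /Tr /Tl /= /e.
have laa := lerefl Hpre a; have ldd := lerefl Hpre d.
asb; rewrite ?mulr0 ?mulVf //; fin.
Qed.

End Sub.
Section Main.
Variables (k : fieldType) (X : Type) (le : X -> X -> Prop).
Hypothesis Hpre : preorder_rel le.
Hypothesis Hlf : locally_finite le.

Let lr := lerefl Hpre.
Let lt_ := letrans Hpre.

Lemma nz_ex (v : vec k X) : v <> (fun _ => 0) -> exists p, v p != 0.
Proof.
move=> Hv; apply: contrapT => Hn; apply: Hv; apply: funext => p.
apply: contrapT => Hp; apply: Hn; exists p; exact/eqP.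
Qed.

Lemma e_nz (x y : X) : e k x y <> (fun _ => 0).
Proof. move=> H; have := e_at k x y; rewrite H => /eqP; by rewrite eq_sym oner_eq0. Qed.

Lemma inC_supp (v : vec k X) p : inC le v -> v p != 0 -> le p.1 p.2.
Proof.
move=> Hv Hp; have [w [[x [y [lxy Ew]]] Hw]] := span_gen Hv Hp.
subst w; have Ep := e_neq0 Hw; by subst p.
Qed.

Lemma D_supp c (v : vec k X) p : Dclass le c v -> v p != 0 -> sim le p.1 c /\ sim le p.2 c.
Proof.
move=> Hv Hp; have [w [[x [y [sx [sy Ew]]]] Hw]] := span_gen Hv Hp.
subst w; have Ep := e_neq0 Hw; by subst p.
Qed.

Lemma D_subco c : subcoalgebra le (Dclass (k:=k) le c).
Proof.
split; [split; [|split]|].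
- move=> v; apply: span_mono => _ [x [y [[lxc _] [[_ lcy] ->]]]].
  apply: span_in; exists x, y; split=> //; exact: lt_ lxc lcy.
- exact: span0.
- by move=> a v w; apply: span_comb.
- move=> v; elim=> [|_ [x [y [[lxc lcx] [[lyc lcy] ->]]]]|a v1 w _ IH1 _ IH2].
  + rewrite Delta0; exact: span0.
  + apply: (Delta_e_span Hlf) => z lxz lzy; apply: span_in.
    exists (e k x z), (e k z y); split; last split => //.
    * apply: span_in; exists x, z; do !split => //; [exact: lt_ lzy lyc| exact: lt_ lcx lxz].
    * apply: span_in; exists z, y; do !split => //; [exact: lt_ lzy lyc| exact: lt_ lcx lxz].
  + rewrite Delta_comb; exact: span_comb.
Qed.

Lemma D_simple c : simple_subcoalgebra le (Dclass (k:=k) le c).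
Proof.
split; first exact: D_subco.
split; first by exists (e k c c); split; [apply: span_in; exists c, c; do !split => // | exact: e_nz].
move=> E sE ED.
case: (pselect (forall v, E v -> v = (fun _ => 0))) => [H|H]; [by left|right].
have [v [Ev nv]] : exists v, E v /\ v <> (fun _ => 0).
  apply: contrapT => Hn; apply: H => v Ev; apply: contrapT => nv; apply: Hn; by exists v.
have [[a d] Hp] := nz_ex nv.
have [[lac lca] [ldc lcd]] := D_supp (ED _ Ev) Hp.
have Ead := stepA Hpre sE Ev Hp (lt_ lac lcd).
move=> u; elim=> [|_ [x [y [[lxc lcx] [[lyc lcy] ->]]]]|a' v1 w _ IH1 _ IH2].
- by case: sE => [[_ [E0 _]] _].
- apply: (stepC sE _ (lt_ lxc lcy) (lt_ lyc lcd)).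
  apply: (stepB sE Ead); [exact: lt_ lac lcx | exact: lt_ lxc lcd].
- by case: sE => [[_ [_ Hc]] _]; apply: Hc.
Qed.

Lemma simple_in_class (D : vec k X -> Prop) :
  simple_subcoalgebra le D -> exists a, forall v, D v -> Dclass le a v.
Proof.
move=> [sD [[v0 [Dv0 nv0]] Hs]].
have [[a d] Hp] := nz_ex nv0.
have lad : le a d by have [[HC _] _] := sD; exact: (inC_supp (HC _ Dv0) Hp).
have Ead := stepA Hpre sD Dv0 Hp lad.
have Eaa := stepC sD Ead (lr a) lad.
exists a.
have DD : forall v, Dclass le a v -> D v.
  move=> u; elim=> [|_ [x [y [[lxc lcx] [[lyc lcy] ->]]]]|a' v1 w _ IH1 _ IH2].
  - by case: sD => [[_ [E0 _]] _].
  - apply: (stepC sD _ (lt_ lxc lcy) lyc).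
    exact: (stepB sD Eaa lcx lxc).
  - by case: sD => [[_ [_ Hc]] _]; apply: Hc.
case: (Hs _ (D_subco a) DD) => [H|//].
exfalso; apply: (@e_nz a a); apply: H; apply: span_in; exists a, a; do !split => //.
Qed.

Lemma partI (v : vec k X) : coradical le v <-> lspan (fun w => exists c : X, Dclass le c w) v.
Proof.
split; apply: span_mono.
- move=> w [D [sD Dw]]; have [a Ha] := simple_in_class sD.
  apply: span_in; exists a; exact: Ha.
- move=> w [c Hc]; apply: span_in; exists (Dclass le c); split => //; exact: D_simple.
Qed.

End Main.
Section Chains.
Variables (X : Type) (le : X -> X -> Prop).
Hypothesis Hpre : preorder_rel le.

Let lt_ := letrans Hpre.

Lemma slt_trans a b c : Defs.lt le a b -> Defs.lt le b c -> Defs.lt le a c.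
Proof.
move=> [lab nba] [lbc ncb]; split; first exact: lt_ lab lbc.
move=> lca; apply: ncb; exact: lt_ lca lab.
Qed.

Lemma chain_lt x y m : has_chain le x y m -> (0 < m)%N -> Defs.lt le x y.
Proof.
move=> [f [f0 [fm Hf]]] m0; subst.
suff H : forall i, (0 < i)%N -> (i <= m)%N -> Defs.lt le (f 0%N) (f i) by exact: H.
elim=> [//|i IH] _ im.
case: i IH im => [|i] IH im; first exact: Hf.
apply: slt_trans (IH _ (ltnW im)) (Hf _ im) => //.
Qed.

Lemma chain_shift x y m : has_chain le x y m.+1 ->
  exists z, Defs.lt le x z /\ has_chain le z y m.
Proof.
move=> [f [f0 [fm Hf]]]; exists (f 1%N); split; first by rewrite -f0; exact: Hf.
exists (fun i => f i.+1); split=> //; split=> // i im; exact: Hf.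
Qed.

Lemma chain_cons x z y m : Defs.lt le x z -> has_chain le z y m -> has_chain le x y m.+1.
Proof.
move=> lxz [g [g0 [gm Hg]]].
exists (fun i => if i is j.+1 then g j else x); split=> //; split=> // -[|i] im /=.
  by rewrite g0.
exact: Hg.
Qed.

Definition Bn n x y := forall m, has_chain le x y m -> (m <= n)%N.

Lemma lenB n x y : le x y ->
  ((exists l, interval_length le x y l /\ (l <= n)%N) <-> Bn n x y).
Proof.
move=> lxy; split.
- move=> [l [[[sxy ->]|[nsim [lpos [hc lmax]]]] ln]] m hm.
  + case: m hm => // m hm; have [_ nyx] := chain_lt hm (ltn0Sn m).
    by case: sxy.
  + exact: leq_trans (lmax _ hm) ln.
- move=> B; case: (pselect (sim le x y)) => [sxy|nsim].
    by exists 0%N; split=> //; left.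
  have ltxy : Defs.lt le x y by split=> // lyx; apply: nsim.
  have h1 : has_chain le x y 1.
    apply: chain_cons ltxy _; exists (fun _ => y); split=> //; split=> //.
  have exP : exists m, `[< has_chain le x y m >] by exists 1%N; exact: asboolT.
  have ubP : forall m, `[< has_chain le x y m >] -> (m <= n)%N by move=> m /asboolW; exact: B.
  case: (ex_maxnP exP ubP) => i /asboolW Hi Hmax.
  exists i; split; last exact: B.
  right; split=> //; split; first exact: (Hmax 1%N (asboolT h1)).
  split=> // m hm; exact: Hmax _ (asboolT hm).
Qed.

End Chains.
Section Part2.
Variables (k : fieldType) (X : Type) (le : X -> X -> Prop).
Hypothesis Hpre : preorder_rel le.
Hypothesis Hlf : locally_finite le.

Definition Lgen n (w : vec k X) := exists x y, le x y /\
             (exists l, interval_length le x y l /\ (l <= n)%N) /\ w = e k x y.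

Lemma inC_fin (v : vec k X) : inC le v -> exists L, forall p, v p != 0 -> List.In p L.
Proof.
elim=> [|_ [x [y [_ ->]]]|a v1 w _ [L1 H1] _ [L2 H2]].
- by exists nil => p; rewrite eqxx.
- exists [:: (x, y)] => p Hp; have Ep := e_neq0 Hp; subst p; by left.
- exists (L1 ++ L2) => p Hp; apply: List.in_or_app.
  case: (eqVneq (v1 p) 0) => [h1|h1]; last by left; exact: H1.
  right; apply: H2; apply: contraNneq Hp => ->; by rewrite h1 mulr0 addr0.
Qed.

Lemma partII0 (v : vec k X) : coradical le v <-> lspan (Lgen 0) v.
Proof.
rewrite (partI Hpre Hlf); split; apply: span_mono.
- move=> w [c Hc]; apply: span_mono Hc => _ [x [y [[lxc lcx] [[lyc lcy] ->]]]].
  apply: span_in; exists x, y; split; first exact: (letrans Hpre lxc lcy).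
  split=> //; exists 0%N; split=> //; left; split=> //; split; [exact: (letrans Hpre lxc lcy) | exact: (letrans Hpre lyc lcx)].
- move=> _ [x [y [lxy [[l [IL l0]] ->]]]].
  have sxy : sim le x y.
    case: IL => [[]//|[_ [lpos _]]]; by move: l0; rewrite leqn0 => /eqP l0; subst.
  apply: span_in; exists x; apply: span_in; exists x, y; split; first by split; apply: lerefl.
  split=> //; case: sxy => lxy' lyx; split=> //.
Qed.

Lemma Lgen_e n x y : le x y -> Bn le n x y -> Lgen n (e k x y).
Proof. move=> lxy B; exists x, y; split=> //; split=> //; exact/(lenB Hpre). Qed.

Lemma Lgen_B n w p : lspan (Lgen n) w -> w p != 0 -> le p.1 p.2 /\ Bn le n p.1 p.2.
Proof.
move=> Hw Hp; have [g [[x [y [lxy [Hl Eg]]]] Hg]] := span_gen Hw Hp.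
subst g; have Ep := e_neq0 Hg; subst p; split=> //; exact/(lenB Hpre).
Qed.

Lemma tens_nz (u w : vec k X) p q : tens u w (p, q) != 0 -> u p != 0 /\ w q != 0.
Proof.
rewrite /tens /= => H; split; apply: contraNneq H => ->; by rewrite ?mul0r ?mulr0.
Qed.

Lemma partII n (v : vec k X) : corad_filt le n v <-> lspan (Lgen n) v.
Proof.
elim: n v => [|n IH] v; first exact: partII0.
have lr := lerefl Hpre.
split.
- move=> [HC HD]; have [L HL] := inC_fin HC.
  apply: (fin_supp (L := L)) => -[x y] Hp; split; first exact: HL.
  have lxy := inC_supp HC Hp.
  apply: span_in; apply: Lgen_e => // m hm.
  case: (leqP m n.+1) => // hlt; exfalso.
  case: m hm hlt => // m hm hlt.
  have [z [[lxz nzx] hz]] := chain_shift hm.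
  have [lzy _] : Defs.lt le z y by apply: (chain_lt Hpre hz); exact: (leq_ltn_trans (leq0n n) hlt).
  have HP : Delta le v ((x, z), (z, y)) != 0 by rewrite /= asboolT.
  have [t [Gt Ht]] := span_gen HD HP.
  case: Gt => Ht'.
  + have [g [[u [w [Cu [Cw Eg]]]] Hg]] := span_gen Ht' Ht; subst g.
    have [Hu _] := tens_nz Hg.
    have [_ B] := Lgen_B (proj1 (partII0 u) Cu) Hu.
    have H1 : has_chain le x z 1.
      apply: (chain_cons (conj lxz nzx)); by exists (fun _ => z).
    by have := B _ H1.
  + have [g [[u [w [Cu [Cw Eg]]]] Hg]] := span_gen Ht' Ht; subst g.
    have [_ Hw] := tens_nz Hg.
    have [_ B] := Lgen_B (proj1 (IH w) Cw) Hw.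
    move: hlt; rewrite ltnS => hlt.
    by have := B _ hz; rewrite leqNgt hlt.
- move=> H; split.
    apply: span_mono H => _ [x [y [lxy [_ ->]]]]; apply: span_in; by exists x, y.
  elim: H => [|_ [x [y [lxy [Hl ->]]]]|a v1 w _ IH1 _ IH2].
  + rewrite Delta0; exact: span0.
  + have B := proj1 (lenB Hpre n.+1 lxy) Hl.
    apply: (Delta_e_span Hlf) => z lxz lzy.
    case: (pselect (le z x)) => [lzx|nzx].
    * apply: span_in; left; apply: span_in; exists (e k x z), (e k z y).
      split; last by split => //; apply: span_in; exists z, y.
      apply/partII0; apply: span_in; apply: Lgen_e => // -[//|m] hm.
      by have [_] := chain_lt Hpre hm (ltn0Sn m).
    * apply: span_in; right; apply: span_in; exists (e k x z), (e k z y).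
      split; first by apply: span_in; exists x, z.
      split=> //; apply/IH; apply: span_in; apply: Lgen_e => // m hm.
      exact: B _ (chain_cons (conj lxz nzx) hm).
  + rewrite Delta_comb; exact: span_comb.
Qed.

End Part2.

Theorem mainTheorem4 (k : fieldType) (X : Type) (le : X -> X -> Prop)
  (Hpre : preorder_rel le) (Hlf : locally_finite le) :
  (forall v : vec k X, @coradical k X le v <->
     lspan (fun w => exists c : X, @Dclass k X le c w) v) /\
  (forall (n : nat) (v : vec k X), @corad_filt k X le n v <->
     lspan (fun w => exists x y, le x y /\
             (exists l, interval_length le x y l /\ (l <= n)%N) /\
             w = @e k X x y) v).
Proof.
split; first exact: partI.
exact: partII.
Qed.
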